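(* Let $X$ be a topological quandle. (1) If $X$ has the discrete topology, then $\bar H^n_Q(X)=0$ and $\bar H^n_W(X)=\bar C^n_W(X)$ for $n\ge1$ and $W=R,D$, and $\bar H^0_Q(X)=\bar H^0_R(X)=\bar C^0_R(X)$. (2) If $X$ has the indiscrete topology, then $\bar H^n_W(X)\cong H^{n+1}_W(X)$ for $n\ge0$ and $W=R,D,Q$. (3) If the underlying quandle structure of $X$ is trivial ($x\triangleright y=x$ for all $x,y$), then $\bar H^n_W(X)=\bar C^n_W(X)$ for $W=R,D,Q$.
   Context: A quandle is a set with a binary operation $\triangleright$ such that $x\triangleright x=x$, each $\beta_y(x)=x\triangleright y$ is bijective, and $(x\triangleright y)\triangleright z=(x\triangleright z)\triangleright(y\triangleright z)$. A topological quandle is a topological space with a continuous quandle operation such that every $\beta_y$ is a homeomorphism. For a topological quandle $X$, $\bar C^R_n(X)$ is the free abelian group on singular $n$-simplices $\sigma:\Delta^n\to X$ modulo identifying two simplices with the same ordered vertex tuple; thus it is free abelian on the tuples $\sigma_{[x_1,\dots,x_{n+1}]}$ ($x_i=\sigma(e_{i-1})$) that are vertex tuples of some singular $n$-simplex. Its boundary is $\partial_n\sigma_{[x_1,\dots,x_{n+1}]}=\sum_{i=2}^{n+1}(-1)^i\big(\sigma_{[x_1,\dots,\hat{x_i},\dots,x_{n+1}]}-\sigma_{[x_1\triangleright x_i,\dots,x_{i-1}\triangleright x_i,x_{i+1},\dots,x_{n+1}]}\big)$. For $n\ge1$, $\bar C^D_n(X)$ is generated by $\sigma_{[x_1,\dots,x_{n+1}]}$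 with $x_i=x_{i+1}$ for some $i\in\{1,\dots,n\}$, and $\bar C^D_0(X)=0$; $\bar C^Q_n(X)=\bar C^R_n(X)/\bar C^D_n(X)$. The cochain groups are $\bar C^n_W(X)=\mathrm{Hom}(\bar C^W_n(X),\mathbb{Z})$ with $\delta^n f=f\circ\partial_{n+1}$, and $\bar H^n_W(X)$ is the resulting cohomology. The rack complex $C^R_n(X)$ is free abelian on $X^n$ with boundary $\partial^R_n(x_1,\dots,x_n)=\sum_{i=2}^n(-1)^i[(x_1,\dots,\hat{x_i},\dots,x_n)-(x_1\triangleright x_i,\dots,x_{i-1}\triangleright x_i,x_{i+1},\dots,x_n)]$; $C^D_n(X)$ is generated by tuples with $x_i=x_{i+1}$ for some $i\in\{1,\dots,n-1\}$; $C^Q_n=C^R_n/C^D_n$; $H^n_W(X)$ is the cohomology of $\mathrm{Hom}(C^W_*(X),\mathbb{Z})$. *)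

(* Defs.v *)
From HB Require Import structures.
From mathcomp Require Import all_boot all_order all_algebra.
From mathcomp Require Import all_classical all_reals all_analysis.
From mathcomp Require Import Rstruct Rstruct_topology.

Set Implicit Arguments.
Unset Strict Implicit.
Unset Printing Implicit Defensive.

Import Order.TTheory GRing.Theory Num.Theory.
Local Open Scope classical_set_scope.
Local Open Scope ring_scope.

Definition is_quandle (X : Type) (op : X -> X -> X) : Prop :=
  [/\ (forall x, op x x = x),
      (forall y, bijective (fun x => op x y)) &
      (forall x y z, op (op x y) z = op (op x z) (op y z))].

Definition is_top_quandle (X : topologicalType) (op : X -> X -> X) : Prop :=
  [/\ is_quandle op,
      continuous (fun p : X * X => op p.1 p.2) &
      (forall y, exists g : X -> X,
          [/\ cancel (fun x => op x y) g, cancel g (fun x => op x y),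
              continuous (fun x => op x y) & continuous g])].

Definition std_simplex (n : nat) : set 'rV[Rdefinitions.R]_n.+1 :=
  [set t | (forall i, 0 <= t ord0 i) /\ \sum_i t ord0 i = 1].

Definition std_vertex (n : nat) (i : 'I_n.+1) : 'rV[Rdefinitions.R]_n.+1 := delta_mx ord0 i.

Definition vertex_tuple (X : topologicalType) (n : nat) (s : seq X) : Prop :=
  exists sigma : 'rV[Rdefinitions.R]_n.+1 -> X,
    {within @std_simplex n, continuous sigma} /\
    s = [seq sigma (std_vertex i) | i <- enum 'I_n.+1].

Definition degenerate (X : Type) (s : seq X) : Prop :=
  exists (a b : seq X) (x : X), s = a ++ x :: x :: b.

(* For a cochain f (a function on tuples, extended by zero outside the basis),
   (f o boundary)(x_1,...,x_m) =
   sum_{i=2}^{m} (-1)^i [ f(x_1,..,^x_i,..,x_m)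
                         - f(x_1|>x_i,..,x_{i-1}|>x_i,x_{i+1},..,x_m) ].
   Here j = i - 1 is the 0-based position of x_i. *)
Definition bd_term (X : Type) (op : X -> X -> X) (f : seq X -> int)
    (s : seq X) (j : nat) : int :=
  if drop j s is y :: post then
    (-1) ^+ j.+1 * (f (take j s ++ post) - f (map (fun x => op x y) (take j s) ++ post))
  else 0.

Definition cobd (X : Type) (op : X -> X -> X) (f : seq X -> int) (s : seq X) : int :=
  \sum_(1 <= j < size s) bd_term op f s j.

(** * Cochain complexes Hom(C_*, Z) of complexes free on a basis of tuples.
    [basis n] is the set of basis tuples of the chain group in degree n.
    A cochain of degree n is a Z-valued function on the basis, represented as
    a function on all tuples vanishing outside the basis.  The coboundary of a
    degree-n cochain f is f o boundary_{n+1}, evaluated on the basis of degree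
    n+1.  Degree -1 is the zero group. *)

Section Complex.
Variables (X : Type) (op : X -> X -> X) (basis : nat -> seq X -> Prop).

Definition cochain (n : nat) (f : seq X -> int) : Prop :=
  forall s, ~ basis n s -> f s = 0.

Definition cocycle (n : nat) (f : seq X -> int) : Prop :=
  cochain n f /\ forall s, basis n.+1 s -> cobd op f s = 0.

Definition coboundary (n : nat) (g : seq X -> int) : Prop :=
  cochain n g /\
  (if n is m.+1 then
     exists h, cochain m h /\ forall s, basis n s -> g s = cobd op h s
   else forall s, g s = 0).

Definition cohom_trivial (n : nat) : Prop :=
  forall f, cocycle n f -> coboundary n f.

Definition cohom_eq_cochains (n : nat) : Prop :=
  (forall f, cochain n f -> cocycle n f) /\
  (forall g, coboundary n g -> forall s, g s = 0).
End Complex.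

(* An isomorphism of abelian groups Z1/B1 ~= Z2/B2 (subquotients of groups of
   functions), presented by a lift phi : Z1 -> Z2 on representatives which is
   additive modulo B2, reflects/preserves B, and is onto modulo B2. *)
Definition subquot_iso (T : Type)
    (Z1 B1 Z2 B2 : (T -> int) -> Prop) : Prop :=
  exists phi : (T -> int) -> (T -> int),
    [/\ (forall z, Z1 z -> Z2 (phi z)),
        (forall z1 z2, Z1 z1 -> Z1 z2 ->
            B2 (fun t => phi (fun u => z1 u + z2 u) t - phi z1 t - phi z2 t)),
        (forall z, Z1 z -> (B2 (phi z) <-> B1 z)) &
        (forall w, Z2 w -> exists2 z, Z1 z & B2 (fun t => w t - phi z t))].

Inductive cpx := WR | WD | WQ.

Definition W_cond (X : Type) (W : cpx) (s : seq X) : Prop :=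
  match W with WR => True | WD => degenerate s | WQ => ~ degenerate s end.

(* basis of \bar C^W_n(X): vertex tuples of singular n-simplices
   (restricted to degenerate ones for D, to non-degenerate ones for Q) *)
Definition bar_basis (X : topologicalType) (W : cpx) (n : nat) (s : seq X) : Prop :=
  vertex_tuple n s /\ W_cond W s.

(* basis of C^W_n(X): n-tuples *)
Definition rack_basis (X : Type) (W : cpx) (n : nat) (s : seq X) : Prop :=
  size s = n /\ W_cond W s.

(* Main.v *)
Require Import Defs.
From HB Require Import structures.
From mathcomp Require Import all_boot all_order all_algebra.
From mathcomp Require Import all_classical all_reals all_analysis.
From mathcomp Require Import Rstruct Rstruct_topology.
Local Open Scope classical_set_scope.
Local Open Scope ring_scope.

Set Implicit Arguments.
Unset Strict Implicit.
Import Order.TTheory GRing.Theory Num.Theory.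


Lemma cobd0 (X : Type) (op : X -> X -> X) f (s : seq X) :
  (forall j y post, drop j s = y :: post -> map (fun z => op z y) (take j s) = take j s) ->
  cobd op f s = 0.
Proof.
move=> H; rewrite /cobd big1 // => j _; rewrite /bd_term.
case E: (drop j s) => [|y post] //.
by rewrite (H _ _ _ E) subrr mulr0.
Qed.

Lemma cobd_triv (X : Type) (op : X -> X -> X) f (s : seq X) :
  (forall x y, op x y = x) -> cobd op f s = 0.
Proof.
move=> H; apply: cobd0 => j y post _.
by rewrite (eq_map (g := id)) ?map_id // => z; apply: H.
Qed.

Lemma cobd_nseq (X : Type) (op : X -> X -> X) f m (x : X) :
  (forall x, op x x = x) -> cobd op f (nseq m x) = 0.
Proof.
move=> H; apply: cobd0 => j y post E.
have [Ey jm] : y = x /\ (j <= m)%N.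
  move: E; rewrite drop_nseq; case E': (m - j)%N => [|k] //= [-> _].
  by split=> //; apply: ltnW; rewrite -subn_gt0 E'.
by rewrite Ey take_nseq //; elim: j {E jm} => //= ? ->; rewrite H.
Qed.

Lemma cobd_small (X : Type) (op : X -> X -> X) f (s : seq X) :
  (size s <= 1)%N -> cobd op f s = 0.
Proof. by move=> H; rewrite /cobd big_geq. Qed.


Lemma std_vertexE n (i j : 'I_n.+1) : std_vertex i ord0 j = (i == j)%:R.
Proof. by rewrite /std_vertex mxE eqxx /= eq_sym. Qed.

Lemma indisc_vt (X : topologicalType) n (s : seq X) :
  (forall A : set X, open A -> A = set0 \/ A = setT) ->
  vertex_tuple n s <-> size s = n.+1.
Proof.
move=> hI; split.
  by case=> sigma [_ ->]; rewrite size_map size_enum_ord.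
case: s => [//|x0 s'] hs.
set s := x0 :: s'.
pose sigma := fun t : 'rV[Rdefinitions.R]_n.+1 =>
  nth x0 s (find (fun i : 'I_n.+1 => t ord0 i == 1) (enum 'I_n.+1)).
exists sigma; split.
  apply/continuousP => A /hI [->|->].
    by rewrite preimage_set0; apply: open0.
  by rewrite preimage_setT; apply: openT.
have -> : [seq sigma (std_vertex i) | i <- enum 'I_n.+1] =
          [seq nth x0 s (val i) | i <- enum 'I_n.+1].
  apply: eq_map => i; rewrite /sigma; congr nth.
  rewrite (eq_find (a2 := pred1 i)); last first.
    by move=> j /=; rewrite std_vertexE pnatr_eq1 [j == i]eq_sym; case: (i == j).
  exact: index_enum_ord.
rewrite (map_comp (nth x0 s) val) val_enum_ord.
by rewrite -hs -/(mkseq _ _) mkseq_nth.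
Qed.


Lemma sum_vertex n (i : 'I_n.+1) :
  \sum_(j < n.+1) (((ord0 : 'I_1) == ord0) && (j == i))%:R = 1 :> Rdefinitions.R.
Proof.
by rewrite (bigD1 i) //= eqxx big1 ?addr0 // => j /negbTE ->.
Qed.

Lemma disc_vt (X : topologicalType) n (s : seq X) :
  (forall A : set X, open A) -> vertex_tuple n s -> exists x, s = nseq n.+1 x.
Proof.
move=> hD [sigma [cs ->]].
suff H : forall i, sigma (std_vertex i) = sigma (std_vertex ord0).
  exists (sigma (std_vertex ord0)).
  rewrite (eq_map H) -[in RHS](size_enum_ord n.+1).
  by elim: (enum 'I_n.+1) => //= ? ? ->.
move=> i.
pose p := fun t : Rdefinitions.R => std_vertex ord0 + t *: (std_vertex i - std_vertex ord0).
have pc : continuous p.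
  by move=> t; apply: cvgD; [exact: cvg_cst | exact: scalel_continuous].
have pE t : p t = (1 - t) *: std_vertex ord0 + t *: std_vertex i.
  by rewrite /p scalerBl scale1r scalerBr addrA addrAC.
have pS : forall t, 0 <= t <= 1 -> std_simplex (p t).
  move=> t /andP[t0 t1]; rewrite pE; split.
    move=> j; rewrite !mxE; apply: addr_ge0; apply: mulr_ge0 => //;
      by rewrite ?subr_ge0 ?ler0n.
  under eq_bigr do rewrite !mxE.
  by rewrite big_split /= -!mulr_sumr !sum_vertex !mulr1 subrK.
have p0 : p 0 = std_vertex ord0 by rewrite /p scale0r addr0.
have p1 : p 1 = std_vertex i by rewrite /p scale1r addrC subrK.
have /continuousP hc := cs.
have [V oV EV] := proj1 (open_subspaceP _ _) (hc [set sigma (std_vertex ord0)] (hD _)).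
have [V' oV' EV'] := proj1 (open_subspaceP _ _) (hc (~` [set sigma (std_vertex ord0)]) (hD _)).
have itvE (t : Rdefinitions.R) : `[0, 1]%classic t <-> 0 <= t <= 1 by rewrite /= in_itv.
have key t : 0 <= t <= 1 -> (V (p t) <-> sigma (p t) = sigma (std_vertex ord0)).
  move=> /pS Sp; split.
    by move=> Vp; have : (V `&` @std_simplex n) (p t) by []; rewrite EV => -[].
  by move=> sp; have : ((from_subspace (@std_simplex n) sigma @^-1` [set sigma (std_vertex ord0)]) `&` @std_simplex n) (p t) by []; rewrite -EV => -[].
have key' t : 0 <= t <= 1 -> (V' (p t) <-> sigma (p t) <> sigma (std_vertex ord0)).
  move=> /pS Sp; split.
    by move=> Vp; have : (V' `&` @std_simplex n) (p t) by []; rewrite EV' => -[].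
  by move=> sp; have : ((from_subspace (@std_simplex n) sigma @^-1` (~` [set sigma (std_vertex ord0)])) `&` @std_simplex n) (p t) by []; rewrite -EV' => -[].
have E : (`[0, 1] `&` (p @^-1` V)) = `[0, 1]%classic :> set Rdefinitions.R.
apply: segment_connected.
- exists 0; split; first by apply/itvE; rewrite lexx ler01.
  by apply/key; rewrite ?lexx ?ler01 // p0.
- by exists (p @^-1` V) => //; apply: (proj1 (continuousP _) pc).
- exists (~` (p @^-1` V')); first by apply: open_closedC; apply: (proj1 (continuousP _) pc).
  apply/seteqP; split => t [/[dup] tA /itvE t01 H]; split => //.
    by move=> /(key' _ t01); apply; apply/(key _ t01).
  apply/(key _ t01); apply: contrapT => ne; apply: H; exact/(key' _ t01).
have : (`[0, 1] `&` (p @^-1` V)) 1 by rewrite E; apply/itvE; rewrite lexx ler01.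
by case=> _ /(key 1); rewrite p1; apply; rewrite lexx ler01.
Qed.


Lemma vt_size (X : topologicalType) n (s : seq X) : vertex_tuple n s -> size s = n.+1.
Proof. by case=> sigma [_ ->]; rewrite size_map size_enum_ord. Qed.

Lemma cobd_zero (X : Type) (op : X -> X -> X) (s : seq X) :
  cobd op (fun _ => 0) s = 0.
Proof.
rewrite /cobd big1 // => j _; rewrite /bd_term.
by case: (drop j s) => // *; rewrite subrr mulr0.
Qed.

Lemma cob_zero (X : Type) (op : X -> X -> X) (basis : nat -> seq X -> Prop) k g :
  (forall t, g t = 0) -> coboundary op basis k g.
Proof.
move=> H; split; first by move=> s _; apply: H.
case: k => [//|m]; exists (fun _ => 0); split => // s _.
by rewrite H cobd_zero.
Qed.

Lemma eq_cochains_of (X : Type) (op : X -> X -> X) (basis : nat -> seq X -> Prop) n :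
  (forall m s f, basis m.+1 s -> cobd op f s = 0) -> cohom_eq_cochains op basis n.
Proof.
move=> H; split=> [f cf|g [cg]]; first by split=> // s bs; exact: H bs.
case: n cg => [//|m] cg [h [_ eh]] s.
case: (pselect (basis m.+1 s)) => [bs|nbs]; first by rewrite eh // (H _ _ _ bs).
exact: cg.
Qed.

Lemma disc_basis (X : topologicalType) W n (s : seq X) :
  (forall A : set X, open A) -> bar_basis W n s -> exists x, s = nseq n.+1 x.
Proof. by move=> hD [vt _]; apply: disc_vt vt. Qed.

Lemma nseq_degen (X : Type) k (x : X) : degenerate (nseq k.+2 x).
Proof. by exists [::], (nseq k x), x. Qed.

Lemma degen_size (X : Type) (s : seq X) : degenerate s -> (2 <= size s)%N.
Proof. by case=> a [b [x ->]]; rewrite size_cat /= addnS addnS. Qed.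

Unset Implicit Arguments.
Set Strict Implicit.

Theorem mainTheorem11 (X : topologicalType) (op : X -> X -> X)
    (hX : is_top_quandle op) :
  (* (1) discrete topology *)
  ((forall A : set X, open A) ->
     (forall n : nat, (1 <= n)%N ->
        [/\ cohom_trivial op (bar_basis WQ) n,
            cohom_eq_cochains op (bar_basis WR) n &
            cohom_eq_cochains op (bar_basis WD) n]) /\
     [/\ cohom_eq_cochains op (bar_basis WQ) 0,
         cohom_eq_cochains op (bar_basis WR) 0 &
         (forall f : seq X -> int, cochain (bar_basis WQ) 0 f <-> cochain (bar_basis WR) 0 f)]) /\
  (* (2) indiscrete topology *)
  ((forall A : set X, open A -> A = set0 \/ A = setT) ->
     forall (n : nat) (W : cpx),
       subquot_iso (cocycle op (bar_basis W) n) (coboundary op (bar_basis W) n)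
                   (cocycle op (rack_basis W) n.+1)
                   (coboundary op (rack_basis W) n.+1)) /\
  (* (3) trivial quandle *)
  ((forall x y : X, op x y = x) ->
     forall (n : nat) (W : cpx), cohom_eq_cochains op (bar_basis W) n).
Proof.
case: hX => -[idem _ _] _ _.
split; [|split].
- move=> hD.
  have EQ : forall W n, cohom_eq_cochains op (@bar_basis X W) n.
    move=> W n; apply: eq_cochains_of => m s f /(disc_basis hD) [x ->].
    exact: cobd_nseq.
  split; last first.
    split; [exact: EQ | exact: EQ|].
    have bE : forall (s : seq X), bar_basis WQ 0 s <-> bar_basis WR 0 s.
      move=> s; split; case=> vt _; split => //= /degen_size.
      by rewrite (vt_size vt).
    by move=> f; split=> cf s nb; apply: cf => /bE.
  case=> [//|m] _; split; [|exact: EQ|exact: EQ].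
  move=> f [cf _]; split => //; exists (fun _ => 0); split => // s [vt nd].
  have [x ex] := disc_vt hD vt.
  by exfalso; apply: nd; rewrite ex; apply: nseq_degen.
- move=> hI n W.
  have bE : forall m (s : seq X), bar_basis W m s <-> rack_basis W m.+1 s.
    move=> m s; have vtE := @indisc_vt X m s hI.
    by rewrite /bar_basis /rack_basis; split => -[A B]; split => //; apply/vtE.
  have chE : forall m (f : seq X -> int), cochain (bar_basis W) m f <-> cochain (rack_basis W) m.+1 f.
    by move=> m f; split => cf s nb; apply: cf => /bE.
  have cocE : forall (f : seq X -> int), cocycle op (bar_basis W) n f <-> cocycle op (rack_basis W) n.+1 f.
    move=> f; split => -[cf H]; split; try exact/chE.
      by move=> s /bE; apply: H.
    by move=> s /bE; apply: H.
  have cobE : forall (g : seq X -> int), coboundary op (bar_basis W) n g <-> coboundary op (rack_basis W) n.+1 g.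
    move=> g; case: n cocE => [|m] _.
      split => -[cg H].
        by apply: cob_zero.
      split; first exact/chE.
      move: H => [h [_ eh]] s.
      case: (pselect (rack_basis W 1 s)) => [bs|nbs].
        by rewrite eh // cobd_small // (proj1 bs).
      exact: cg nbs.
    split => -[cg [h [ch eh]]]; (split; first exact/chE);
      exists h; split; try exact/chE.
      by move=> s /bE; apply: eh.
    by move=> s /bE; apply: eh.
  exists id; split.
  + by move=> z /cocE.
  + move=> z1 z2 _ _; apply: cob_zero => t /=.
    by rewrite [z1 t + _]addrC addrK subrr.
  + by move=> z _; rewrite cobE.
  + move=> w /cocE Zw; exists w => //; apply: cob_zero => t; exact: subrr.
- move=> htriv n W; apply: eq_cochains_of => m s f _.
  exact: cobd_triv.
Qed.
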